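(* Let $p$ be a prime, $m\ge0$ an integer, and $r,s$ positive integers with $r\leq\min\{s,p^m\}$. If $s\equiv1\pmod{p^m}$, then $\varepsilon(r,s,p)=(r-1,-1,\dots,-1)$. If $s\equiv-1\pmod{p^m}$, then $\varepsilon(r,s,p)=(1,\dots,1,-(r-1))$.
   Context: For a positive integer $n$, let $J_n$ denote the $n\times n$ matrix with $1$s in positions $(i,i)$ for $1\le i\le n$ and $(i,i+1)$ for $1\le i<n$, and $0$s elsewhere. For $1\le r\le s$, the Jordan canonical form of $J_r\otimes J_s$ over a field of characteristic $p$ is $J_{\lambda_1}\oplus\cdots\oplus J_{\lambda_r}$ with $\lambda_1\ge\cdots\ge\lambda_r>0$; write $\lambda(r,s,p)=(\lambda_1,\dots,\lambda_r)$. The deviation vector is $\varepsilon(r,s,p)=(\lambda_1-s,\dots,\lambda_r-s)$ (a vector of length $r$). *)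

(* Defs.v *)
From mathcomp Require Import all_boot all_order all_algebra.
From mathcomp Require Export mxtens.
Set Implicit Arguments. Unset Strict Implicit. Unset Printing Implicit Defensive.
Import GRing.Theory.
Local Open Scope ring_scope.

Definition jordan_block (F : fieldType) (n : nat) : 'M[F]_n :=
  \matrix_(i, j) ((i == j :> nat) || (j == i.+1 :> nat))%:R.

(* Positions (0-based) where a new block starts in a block-diagonal matrix
   with consecutive diagonal blocks of sizes l_1, l_2, ... *)
Definition block_starts (l : seq nat) : seq nat :=
  [seq sumn (take k l) | k <- iota 1 (size l)].

(* The block diagonal matrix J_{l_1} (+) J_{l_2} (+) ... (+) J_{l_k},
   as an n x n matrix (meaningful when sumn l = n). *)
Definition jordan_diag (F : fieldType) (n : nat) (l : seq nat) : 'M[F]_n :=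
  \matrix_(i, j)
    ((i == j :> nat) || ((j == i.+1 :> nat) && (i.+1 \notin block_starts l)))%:R.

Definition is_jordan_type (F : fieldType) (n : nat) (A : 'M[F]_n) (l : seq nat) : Prop :=
  [/\ sumn l = n, all (fun x => 0 < x)%N l, sorted geq l &
      exists2 P : 'M[F]_n, P \in unitmx & P *m A *m invmx P = jordan_diag F n l].

Definition deviation (s : nat) (l : seq nat) : seq int :=
  [seq (x%:Z - s%:Z)%R | x <- l].

(* Main.v *)
Require Import Defs.
From mathcomp Require Import all_boot all_order all_algebra.
Import GRing.Theory.
From mathcomp Require Import zify.
Set Implicit Arguments. Unset Strict Implicit. Unset Printing Implicit Defensive.

Section BS.
Variable l : seq nat.
Hypothesis lpos : all (fun x => 0 < x)%N l.
Definition psum k := sumn (take k l).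

Lemma S0 : psum 0 = 0%N. Proof. by rewrite /psum take0. Qed.
Lemma SS k : (k < size l)%N -> psum k.+1 = (psum k + nth 0 l k)%N.
Proof. by move=> hk; rewrite /psum (take_nth 0 hk) sumn_rcons. Qed.
Lemma S_size : psum (size l) = sumn l. Proof. by rewrite /psum take_size. Qed.
Lemma S_mono a b : (a <= b)%N -> (psum a <= psum b)%N.
Proof. by move=> /subnKC <-; rewrite /psum takeD sumn_cat leq_addr. Qed.
Lemma nth_pos k : (k < size l)%N -> (0 < nth 0 l k)%N.
Proof. by move=> hk; move/allP: lpos; apply; rewrite mem_nth. Qed.
Lemma S_smono a b : (a < b)%N -> (b <= size l)%N -> (psum a < psum b)%N.
Proof.
move=> ab bl; apply: (@leq_trans (psum a.+1)); last exact: S_mono.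
rewrite SS; last by apply: leq_trans bl.
by rewrite -addn1 leq_add2l nth_pos //; apply: leq_trans bl.
Qed.
Lemma S_inj a b : (a <= size l)%N -> (b <= size l)%N -> psum a = psum b -> a = b.
Proof.
move=> al bl e; case: (ltngtP a b) => // h.
  by have := S_smono h bl; rewrite e ltnn.
by have := S_smono h al; rewrite e ltnn.
Qed.
Lemma mem_bs i : (i \in block_starts l) = has (fun k => psum k == i) (iota 1 (size l)).
Proof.
rewrite /block_starts; apply/mapP/hasP => [[k hk ->]|[k hk /eqP <-]]; last by exists k.
by exists k => //.
Qed.
Lemma mem_bsP i : reflect (exists2 k, (0 < k <= size l)%N & i = psum k) (i \in block_starts l).
Proof.
rewrite mem_bs; apply: (iffP hasP) => [[k]|[k hk ->]].
  rewrite mem_iota add1n ltnS => hk /eqP <-; by exists k.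
by exists k; rewrite // mem_iota add1n ltnS.
Qed.
Lemma index_bs i : i \in block_starts l ->
  (index i (block_starts l)).+1 <= size l /\ psum (index i (block_starts l)).+1 = i.
Proof.
move=> hi; have hsz : (index i (block_starts l) < size l)%N.
  by rewrite -(size_iota 1 (size l)) -(size_map psum) index_mem.
split=> //.
have := nth_index 0 hi; rewrite /block_starts (nth_map 0) ?size_iota //.
by rewrite nth_iota // add1n.
Qed.
End BS.


Lemma bs_cons x l : block_starts (x :: l) = x :: map (addn x) (block_starts l).
Proof.
rewrite /block_starts /= take0 addn0; congr (_ :: _).
rewrite -[2]/(1 + 1)%N iotaDl -!map_comp; apply: eq_map => k /=.
by rewrite add0n.
Qed.

Lemma sum_lt x y : (y <= x)%N -> (\sum_(0 <= i < x) (i < y) = y)%N.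
Proof.
move=> yx; rewrite (@big_cat_nat _ _ _ y) //=.
rewrite (eq_big_nat _ _ (F2 := fun _ => 1%N)); last by move=> i /andP[_ ->].
rewrite sum_nat_const_nat subn0 muln1 big_nat_cond big1 ?addn0 //.
by move=> i /andP [/andP [hi _] _]; rewrite ltnNge hi.
Qed.

Lemma sum_shift x n (G : nat -> nat) :
  (\sum_(x <= i < x + n) G i = \sum_(0 <= i < n) G (i + x))%N.
Proof. by rewrite -{1}[x]add0n big_addn addKn. Qed.

Definition cnt l k := (\sum_(0 <= i < sumn l)
   ((i + k < sumn l) && all (fun t => t \notin block_starts l) (iota i.+1 k)))%N.

Lemma cntE l k : cnt l k = sumn [seq x - k | x <- l]%N.
Proof.
elim: l => [|x l IH]; first by rewrite /cnt big_geq.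
rewrite /cnt /= (@big_cat_nat _ _ _ x) ?leq_addr //=.
rewrite sum_shift -IH; congr (_ + _)%N.
  rewrite -(sum_lt (leq_subr k x)); apply: eq_big_nat => i /andP [_ hi].
  rewrite bs_cons; congr (nat_of_bool _).
  case: (ltnP (i + k) x) => h.
    rewrite (ltn_addr _ h) /=.
    have -> : (i < x - k) = true by apply/idP; lia.
    apply/allP => t.
    rewrite mem_iota in_cons => /andP [h1 h2]; apply/negP => /orP [/eqP e|/mapP [t' _ e]]; lia.
  have -> : (i < x - k) = false by apply/negbTE/negP; lia.
  apply/negP => /andP [_ /allP H].
  have hx : x \in iota i.+1 k by rewrite mem_iota; apply/andP; split; lia.
  by move: (H x hx); rewrite in_cons eqxx.
apply: eq_big_nat => i /andP [_ hi]; rewrite bs_cons.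
have -> : (i + x + k < x + sumn l)%N = (i + k < sumn l)%N by apply/idP/idP; lia.
congr (_ && _).
rewrite -addSn addnC iotaDl all_map; apply: eq_in_all => t.
rewrite mem_iota /= in_cons => /andP [h1 _].
rewrite (mem_map (@addnI x)); congr (~~ _); apply/orP/idP => [[/eqP e|//]|->]; [lia|by right].
Qed.

Lemma sumn_sub_S s k : sumn [seq x - k | x <- s]%N =
   (sumn [seq x - k.+1 | x <- s] + count (fun x => k < x) s)%N.
Proof.
elim: s => [|x s IH] //=; rewrite IH.
case: (ltnP k x) => h /=; move: (sumn _) (count _ _) => a b; lia.
Qed.

Lemma count_gt_S s k : count (fun x => k < x) s =
   (count (pred1 k.+1) s + count (fun x => k.+1 < x) s)%N.
Proof.
elim: s => [|x s IH] //=; rewrite IH.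
case: (ltngtP k.+1 x) => h /=; move: (count _ _) (count _ _) => a b.
all: lia.

Qed.

Lemma part_det l l' : all (fun x => 0 < x)%N l -> all (fun x => 0 < x)%N l' ->
  sorted geq l -> sorted geq l' ->
  (forall k, sumn [seq x - k | x <- l]%N = sumn [seq x - k | x <- l']%N) -> l = l'.
Proof.
move=> p p' s s' H.
have C : forall k, count (fun x => k < x) l = count (fun x => k < x) l'.
  by move=> k; have := H k; rewrite (sumn_sub_S l) (sumn_sub_S l') H => /eqP; rewrite eqn_add2l => /eqP.
apply: (sorted_eq (leT := geq)) => //.
- by move=> a b c /= h1 h2; apply: leq_trans h2 h1.
- by move=> a b /andP [h1 h2]; apply/eqP; rewrite /= in h1 h2; rewrite eqn_leq h1 h2.
apply/allP => x _; apply/eqP; case: x => [|x].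
  have z : forall s, all (fun x => 0 < x)%N s -> count (pred1 0) s = 0%N.
    by move=> t /allP a; apply/eqP; rewrite -leqn0 leqNgt -has_count; apply/hasP => [[y /a]] /= h /eqP e; rewrite e in h.
  by rewrite (z _ p) (z _ p').
by have := C x; rewrite (count_gt_S l) (count_gt_S l') C => /eqP; rewrite eqn_add2r => /eqP.
Qed.

Local Open Scope ring_scope.


Section Chain.
Variables (F : fieldType) (n : nat) (N : 'M[F]_n) (l : seq nat) (v : nat -> 'rV[F]_n).
Hypothesis lpos : all (fun x => 0 < x)%N l.
Hypothesis lsum : sumn l = n.
Hypothesis vker : forall b, (b < size l)%N -> v b *m N ^+ (nth 0%N l b) = 0.
Local Notation bs := (block_starts l).
Local Notation S := (psum l).

Lemma mulmxXS (w : 'rV[F]_n) j : w *m N ^+ j *m N = w *m N ^+ j.+1.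
Proof. by rewrite -mulmxA exprSr mulmxE. Qed.

Fixpoint f i := match i with 0 => v 0 | i'.+1 =>
   if i \in bs then v (index i bs).+1 else f i' *m N end.

Lemma f_inv i : (i < n)%N -> exists b j, [/\ (b < size l)%N, (j < nth 0%N l b)%N,
   i = (S b + j)%N & f i = v b *m N ^+ j].
Proof.
elim: i => [|i IH] hi.
  case: l lpos lsum hi => [|x l'] /= hp hs hi; first by rewrite -hs in hi.
  exists 0%N, 0%N; rewrite S0 expr0 mulmx1; split=> //.
  by case/andP: hp.
have [b [j [hb hj ei hf]]] := IH (ltnW hi).
subst i.
rewrite /=; case: ifP => hbs.
  have [h1 h2] := index_bs hbs.
  set b' := (index _ _).+1 in h1 h2 *.
  have hb' : (b' < size l)%N.
    rewrite ltn_neqAle h1 andbT; apply/eqP=> e.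
    have : (S b' < n)%N by rewrite h2.
    by rewrite e S_size lsum ltnn.
  exists b', 0%N; rewrite expr0 mulmx1 addn0; split=> //.
  exact: nth_pos.
exists b, j.+1; rewrite hf mulmxXS addnS; split=> //.
rewrite ltn_neqAle hj andbT; apply/negP=> /eqP e.
move/negbT: hbs => /negP; apply; apply/mem_bsP; exists b.+1.
  by rewrite /=.
by rewrite SS // -e addnS.
Qed.

Lemma f_end i : (i < n)%N -> i.+1 \in bs -> f i *m N = 0.
Proof.
move=> hi /mem_bsP [k /andP [k0 kl] ek].
have [b [j [hb hj ei hf]]] := f_inv hi.
have kb : k = b.+1.
  apply/eqP; rewrite eqn_leq; apply/andP; split.
    rewrite leqNgt; apply/negP => h.
    have := S_smono lpos h kl; rewrite SS // -ek ei.
    by rewrite ltnS leq_add2l leqNgt hj.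
  rewrite ltnNge; apply/negP => h.
  have := S_mono l h; rewrite -ek ei.
  by rewrite ltnNge leq_addr.
move: ek; rewrite kb SS // ei => /eqP. rewrite -addnS eqn_add2l => /eqP ej.
by rewrite -ei hf mulmxXS ej vker.
Qed.

Lemma f_start b : (b < size l)%N -> exists2 i, (i < n)%N & f i = v b.
Proof.
case: b => [|b] hb.
  by exists 0%N => //; have := S_smono lpos hb (leqnn _); rewrite S0 S_size lsum.
exists (S b.+1); first by have := S_smono lpos hb (leqnn _); rewrite S_size lsum.
have hpos : (0 < S b.+1)%N.
  by have := S_smono lpos (ltn0Sn b) (ltnW hb); rewrite S0.
have hmem : S b.+1 \in bs by apply/mem_bsP; exists b.+1; rewrite //= ltnW.
have [h1 h2] := index_bs hmem.
have e : (index (S b.+1) bs).+1 = b.+1.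
  apply: (S_inj lpos) => //; exact: ltnW.
move: hmem h2 e; case: (S b.+1) hpos => // k _ /= -> _ ->; done.
Qed.


Definition Dm : 'M[F]_n := \matrix_(i < n, j < n) ((j == i.+1 :> nat) && (i.+1 \notin bs))%:R.
Lemma jd_D : jordan_diag F n l = 1%:M + Dm.
Proof.
apply/matrixP => i j; rewrite !mxE.
case: (eqVneq i j) => [->|ne] /=.
  by rewrite eqxx (ltn_eqF (ltnSn j)) /= addr0.
rewrite add0r; case: eqP => //= e; case/eqP: ne; exact: val_inj.
Qed.

Definition Pm : 'M[F]_n := \matrix_(i < n) f i.

Lemma PN : Pm *m N = Dm *m Pm.
Proof.
apply/row_matrixP => i; rewrite !row_mul rowK.
case: (boolP (i.+1 \in bs)) => h.
  have -> : row i Dm = 0 by apply/rowP => j; rewrite !mxE h andbF.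
  by rewrite mul0mx f_end.
have hi1 : (i.+1 < n)%N.
  rewrite ltn_neqAle ltn_ord andbT; apply/eqP => e; move/negP: h; apply.
  have hl : (0 < size l)%N.
    rewrite lt0n size_eq0; apply/eqP => l0; have := ltn_ord i.
    move: (nat_of_ord i); rewrite -lsum l0 => k; by [].
  apply/mem_bsP; exists (size l); first by rewrite hl leqnn.
  by rewrite S_size lsum e.
have -> : row i Dm = delta_mx 0 (Ordinal hi1).
  by apply/rowP => j; rewrite !mxE h andbT eqxx.
by rewrite -rowE rowK /= (negbTE h).
Qed.

Lemma chain_jordan : (exists K, N ^+ K = 0) ->
  (forall W : 'M_n, (forall b, (b < size l)%N -> (v b <= W)%MS) -> (N <= W)%MS -> (1%:M <= W)%MS) ->
  exists2 P, P \in unitmx & P *m (1%:M + N) *m invmx P = jordan_diag F n l.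
Proof.
move=> [K hK] hspan.
have PNP : (Pm *m N <= Pm)%MS by rewrite PN submxMl.
have h1 : (1%:M <= Pm + N)%MS.
  apply: hspan; last exact: addsmxSr.
  move=> b hb; have [i hi <-] := f_start hb.
  apply: submx_trans (addsmxSl _ _).
  by have := row_sub (Ordinal hi) Pm; rewrite rowK.
have hk : forall k, (1%:M <= Pm + N ^+ k)%MS.
  elim => [|k IH]; first by rewrite expr0 addsmxSr.
  apply: submx_trans h1 _; rewrite addsmx_sub addsmxSl /=.
  have := submxMr N IH; rewrite mul1mx => h2.
  apply: submx_trans h2 _.
  rewrite addsmxMr; apply: addsmxS => //.
  by rewrite exprSr mulmxE.
have hu : Pm \in unitmx.
  by rewrite -row_full_unit -sub1mx; have := hk K; rewrite hK addsmx0.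
exists Pm => //.
by rewrite mulmxDr mulmx1 PN -{1}[Pm]mul1mx -mulmxDl -jd_D mulmxK.
Qed.
End Chain.


Lemma sum_delta2 (F : fieldType) n (x y : 'I_n) :
  \sum_(j < n) ((j == x)%:R * (j == y)%:R : F) = (x == y)%:R.
Proof.
rewrite (bigD1 x) //= big1 => [|j /negbTE ->]; last by rewrite mul0r.
by rewrite eqxx mul1r addr0 eq_sym.
Qed.

Lemma rank_pinj (F : fieldType) n (c : pred 'I_n) (g : 'I_n -> 'I_n) (T : 'M[F]_n) :
  {in c &, injective g} -> (forall i j, T i j = (c i && (j == g i))%:R) -> \rank T = #|c|.
Proof.
move=> ginj hT.
pose R : 'M[F]_(#|c|, n) := \matrix_(a < #|c|) row (enum_val a) T.
have RE : forall a j, R a j = (j == g (enum_val a))%:R.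
  by move=> a j; have ca : c (enum_val a) := enum_valP a; rewrite !mxE hT ca.
have RT : (R <= T)%MS by apply/row_subP => a; rewrite /R rowK row_sub.
have TR : (T <= R)%MS.
  apply/row_subP => i; case: (boolP (c i)) => ci.
    by have := row_sub (enum_rank_in ci i) R; rewrite /R rowK enum_rankK_in.
  have -> : row i T = 0 by apply/rowP => j; rewrite !mxE hT (negbTE ci).
  exact: sub0mx.
clearbody R.
have RRt : R *m R^T = 1%:M.
  apply/matrixP => a b; rewrite !mxE.
  under eq_bigr do rewrite !mxE !RE.
  rewrite sum_delta2; congr (_%:R).
  by rewrite (inj_in_eq ginj) ?enum_valP // (inj_eq enum_val_inj).
have hR : \rank R = #|c|.
  apply/eqP; rewrite eqn_leq rank_leq_row /=.
  by have := mxrankM_maxl R R^T; rewrite RRt mxrank1.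
apply/eqP; rewrite -hR eqn_leq !mxrankS //.
Qed.


Section Rk.
Variable F : fieldType.

Lemma DmX n l k (i j : 'I_n) : (Dm F n l ^+ k) i j =
  ((j == (i + k)%N :> nat) && all (fun t => t \notin block_starts l) (iota i.+1 k))%:R.
Proof.
elim: k i j => [|k IH] i j.
  rewrite expr0 !mxE addn0 /= andbT eq_sym; congr (_%:R).
rewrite exprSr -mulmxE mxE.
under eq_bigr do rewrite IH mxE.
case: (ltnP (i + k)%N n) => h.
  have -> : iota i.+1 k.+1 = iota i.+1 k ++ [:: (i + k).+1].
    by rewrite -[k.+1]addn1 iotaD addSn.
  rewrite all_cat /= andbT.
  rewrite (bigD1 (Ordinal h)) //= big1 => [|m hm]; last first.
    rewrite (_ : (m == (i + k)%N :> nat) = false) ?mul0r //.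
    by apply/negbTE; apply: contra hm => /eqP e; apply/eqP; apply: val_inj.
  rewrite eqxx addr0 -natrM mulnb addnS.
  by rewrite andTb andbCA.
rewrite big1 => [|m _]; last first.
  by rewrite (_ : (m == (i + k)%N :> nat) = false) ?mul0r //; apply/negbTE; move: (ltn_ord m); lia.
by rewrite (_ : (j == (i + k.+1)%N :> nat) = false) //; apply/negbTE; move: (ltn_ord j); lia.
Qed.

Lemma rank_DmX l k : \rank (Dm F (sumn l) l ^+ k) = cnt l k.
Proof.
set n := sumn l.
pose c' := fun i : nat => ((i + k < n)%N && all (fun t => t \notin block_starts l) (iota i.+1 k)).
pose g := fun i : 'I_n => insubd i (i + k)%N.
rewrite (@rank_pinj _ _ (fun i : 'I_n => c' i) g).
- rewrite -sum1_card -(big_mkord c' (fun _ => 1%N)) big_mkcond /cnt -/n.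
  by apply: eq_bigr => i _; rewrite /c'; case: ifP.
- move=> x y /= /andP [hx _] /andP [hy _] /(congr1 val).
  rewrite !val_insubd hx hy => /eqP; rewrite eqn_add2r => /eqP e; exact: val_inj.
- move=> i j; rewrite DmX /c' /g.
  case: (ltnP (i + k)%N n) => h /=.
    rewrite andbC; congr (_ && _)%:R.
    by rewrite -val_eqE val_insubd h.
  rewrite (_ : (j == (i + k)%N :> nat) = false) //.
  by apply/negbTE; move: (ltn_ord j); lia.
Qed.

Lemma conjX n (P M : 'M[F]_n) k : P \in unitmx ->
  (P *m M *m invmx P) ^+ k = P *m M ^+ k *m invmx P.
Proof.
move=> hP; elim: k => [|k IH]; first by rewrite !expr0 mulmx1 mulmxV.
rewrite exprS IH -mulmxE !mulmxA mulmxKV // -!mulmxA exprS -mulmxE.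
by rewrite !mulmxA.
Qed.

Lemma rank_conj n (P M : 'M[F]_n) : P \in unitmx -> \rank (P *m M *m invmx P) = \rank M.
Proof.
move=> hP; rewrite mxrankMfree; last by rewrite row_free_unit unitmx_inv.
by rewrite (eqmxMfull _ _); rewrite // row_full_unit.
Qed.

Lemma jt_rank n (A : 'M[F]_n) l : is_jordan_type A l ->
  forall k, \rank ((A - 1%:M) ^+ k) = sumn [seq x - k | x <- l]%N.
Proof.
case=> hs hp hsort [P hP hPA] k.
rewrite -(rank_conj _ hP) -conjX // mulmxBr mulmxBl mulmx1 mulmxV // hPA.
subst n; rewrite jd_D addrC addKr rank_DmX cntE //.
Qed.

Lemma jt_uniq n (A : 'M[F]_n) l l' : is_jordan_type A l -> is_jordan_type A l' -> l = l'.
Proof.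
move=> h h'; have := jt_rank h; have := jt_rank h'.
case: h => _ hp hs _; case: h' => _ hp' hs' _ e e'.
by apply: part_det => // k; rewrite -e -e'.
Qed.
End Rk.


Lemma bin_q_dvd p e a i : prime p -> (0 < i < p ^ e)%N -> (p %| 'C(a * p ^ e, i))%N.
Proof.
move=> pp /andP [i0 ilt]; case: i i0 ilt => // i _ ilt.
have h := mul_bin_diag (a * p ^ e) i.
apply/negPn/negP => nd.
have cop : coprime (p ^ e) 'C(a * p ^ e, i.+1).
  by rewrite coprimeXl // prime_coprime.
have : (p ^ e %| i.+1 * 'C(a * p ^ e, i.+1))%N by rewrite -h dvdn_mulr // dvdn_mull.
rewrite Gauss_dvdl // => /dvdn_leq; lia.
Qed.

Section Frob.
Variables (F : fieldType) (p : nat).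
Hypothesis pp : prime p.
Hypothesis pF : p \in [pchar F].

Lemma natF0 c : (p %| c)%N -> (c%:R : F) = 0.
Proof. by case/dvdnP => k ->; rewrite natrM (pcharf0 pF) mulr0. Qed.

Lemma frob1 n (A B : 'M[F]_n) : GRing.comm A B -> (A + B) ^+ p = A ^+ p + B ^+ p.
Proof.
move=> cAB; rewrite exprDn_comm //.
have [p' ep] : exists p', p = p'.+2 by case: p pp => [|[|p']] //; exists p'.
rewrite ep big_ord_recr big_ord_recl /= big1 => [|i _].
  by rewrite subn0 subnn bin0 binn expr0 mulr1 mul1r addr0.
rewrite -scaler_nat natF0 ?scale0r // -ep; apply: prime_dvd_bin => //.
by move: (ltn_ord i); rewrite /bump /=; lia.
Qed.

Lemma frobX n (A B : 'M[F]_n) e : GRing.comm A B ->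
  (A + B) ^+ (p ^ e) = A ^+ (p ^ e) + B ^+ (p ^ e).
Proof.
move=> cAB; elim: e => [|e IH]; first by rewrite !expn0 !expr1.
rewrite expnSr !exprM IH frob1 //.
by apply: commrX; apply/commr_sym; apply: commrX; apply/commr_sym.
Qed.

Lemma binm1 q a i : (0 < a)%N -> (i < p ^ q)%N -> ('C((a * p ^ q).-1, i)%:R : F) = (-1) ^+ i.
Proof.
move=> a0; elim: i => [|i IH] hi; first by rewrite bin0 expr0.
have hpos : (0 < a * p ^ q)%N by rewrite muln_gt0 a0 expn_gt0 prime_gt0.
have := binS (a * p ^ q).-1 i; rewrite prednK // => e.
have : ('C(a * p ^ q, i.+1)%:R : F) = 0 by apply: natF0; apply: bin_q_dvd => //.
rewrite e natrD IH ?(ltnW hi) // => /eqP; rewrite addr_eq0 => /eqP ->.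
by rewrite exprS mulN1r.
Qed.
End Frob.


Section Tens.
Variable F : fieldType.

Lemma tensDl m n p q (A B : 'M[F]_(m, n)) (C : 'M[F]_(p, q)) : (A + B) *t C = A *t C + B *t C.
Proof. by apply/matrixP => i j; rewrite !mxE mulrDl. Qed.
Lemma tensDr m n p q (A : 'M[F]_(m, n)) (B C : 'M[F]_(p, q)) : A *t (B + C) = A *t B + A *t C.
Proof. by apply/matrixP => i j; rewrite !mxE mulrDr. Qed.
Lemma tens11 m n : (1%:M : 'M[F]_m) *t (1%:M : 'M[F]_n) = 1%:M.
Proof.
apply/matrixP => i j.
case: (mxtens_indexP i) => i1 i2; case: (mxtens_indexP j) => j1 j2.
rewrite tensmxE !mxE -natrM mulnb (inj_eq (can_inj (@mxtens_indexK _ _))).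
by rewrite xpair_eqE.
Qed.

Definition shiftm n : 'M[F]_n := jordan_block F n - 1%:M.
Lemma shiftmE n (i j : 'I_n) : shiftm n i j = (j == i.+1 :> nat)%:R.
Proof.
rewrite !mxE; case: (eqVneq i j) => [->|ne] /=.
  by rewrite eqxx (ltn_eqF (ltnSn j)) subrr.
rewrite subr0; congr (_%:R); case: eqP => //= e; case/eqP: ne; exact: val_inj.
Qed.
Lemma shiftmX n k (i j : 'I_n) : (shiftm n ^+ k) i j = (j == (i + k)%N :> nat)%:R.
Proof.
elim: k i j => [|k IH] i j.
  by rewrite expr0 !mxE addn0 eq_sym.
rewrite exprSr -mulmxE mxE.
under eq_bigr do rewrite IH shiftmE.
case: (ltnP (i + k)%N n) => h.
  rewrite (bigD1 (Ordinal h)) //= big1 => [|m hm]; last first.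
    rewrite (_ : (m == (i + k)%N :> nat) = false) ?mul0r //.
    by apply/negbTE; apply: contra hm => /eqP e; apply/eqP; apply: val_inj.
  by rewrite eqxx mul1r addr0 addnS.
rewrite big1 => [|m _]; last first.
  by rewrite (_ : (m == (i + k)%N :> nat) = false) ?mul0r //; apply/negbTE; move: (ltn_ord m); lia.
by rewrite (_ : (j == (i + k.+1)%N :> nat) = false) //; apply/negbTE; move: (ltn_ord j); lia.
Qed.
Lemma shiftm_nil n k : (n <= k)%N -> shiftm n ^+ k = 0.
Proof.
move=> nk; apply/matrixP => i j; rewrite shiftmX mxE.
by rewrite (_ : (j == (i + k)%N :> nat) = false) //; apply/negbTE; move: (ltn_ord j); lia.
Qed.

Variables r s : nat.
Definition Xt : 'M[F]_(r * s) := shiftm r *t 1%:M.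
Definition Yt : 'M[F]_(r * s) := 1%:M *t shiftm s.
Definition Nt : 'M[F]_(r * s) := Xt + Yt + Xt * Yt.

Lemma XtX k : Xt ^+ k = shiftm r ^+ k *t 1%:M.
Proof.
elim: k => [|k IH]; first by rewrite !expr0 tens11.
by rewrite exprS IH -mulmxE tensmx_mul mulmx1 exprS mulmxE.
Qed.
Lemma YtX k : Yt ^+ k = 1%:M *t shiftm s ^+ k.
Proof.
elim: k => [|k IH]; first by rewrite !expr0 tens11.
by rewrite exprS IH -mulmxE tensmx_mul mulmx1 exprS mulmxE.
Qed.
Lemma XYX a c : Xt ^+ a * Yt ^+ c = shiftm r ^+ a *t shiftm s ^+ c.
Proof. by rewrite XtX YtX -mulmxE tensmx_mul mulmx1 mul1mx. Qed.
Lemma cXY : GRing.comm Xt Yt.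
Proof. by rewrite /GRing.comm -!mulmxE !tensmx_mul !mulmx1 !mul1mx. Qed.
Lemma Xt_nil k : (r <= k)%N -> Xt ^+ k = 0.
Proof. by move=> h; rewrite XtX shiftm_nil // tens0mx. Qed.
Lemma Yt_nil k : (s <= k)%N -> Yt ^+ k = 0.
Proof. by move=> h; rewrite YtX shiftm_nil // tensmx0. Qed.
Lemma A_eq : jordan_block F r *t jordan_block F s = 1%:M + Nt.
Proof.
have -> : jordan_block F r = 1%:M + shiftm r by rewrite /shiftm addrC subrK.
have -> : jordan_block F s = 1%:M + shiftm s by rewrite /shiftm addrC subrK.
rewrite tensDl tensDr [shiftm r *t _]tensDr tens11 /Nt /Xt /Yt -mulmxE tensmx_mul mulmx1 mul1mx.
by rewrite !addrA (addrAC 1%:M).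
Qed.
Lemma A_fac : (1 + Xt) * (1 + Yt) = 1 + Nt.
Proof. by rewrite mulrDl !mulrDr !mul1r mulr1 /Nt !addrA (addrAC 1). Qed.
End Tens.


Lemma sub_sub (F : fieldType) m1 m2 n (A B : 'M[F]_(m1, n)) (W : 'M[F]_(m2, n)) :
  (A <= W)%MS -> (B <= W)%MS -> (A - B <= W)%MS.
Proof. by move=> hA hB; apply: addmx_sub => //; rewrite eqmx_opp. Qed.

Section Spec.
Variables (F : fieldType) (p m r s : nat).
Hypothesis pp : prime p.
Hypothesis pF : p \in [pchar F].
Hypothesis r0 : (0 < r)%N.
Hypothesis s0 : (0 < s)%N.
Hypothesis rq : (r <= p ^ m)%N.
Local Notation Xt := (@Xt F r s).
Local Notation Yt := (@Yt F r s).
Local Notation Nt := (@Nt F r s).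

Lemma cYX c a : GRing.comm (Xt ^+ a) (Yt ^+ c).
Proof. by apply: commrX; apply/commr_sym; apply: commrX; apply/commr_sym; apply: cXY. Qed.

Lemma NqE : Nt ^+ (p ^ m) = Yt ^+ (p ^ m).
Proof.
have c1 : GRing.comm (1 + Xt) (1 + Yt).
  apply: commrD; first exact: commr1.
  apply/commr_sym; apply: commrD; first exact: commr1.
  by apply/commr_sym; apply: cXY.
have := congr1 (fun M => M ^+ (p ^ m)) (A_fac F r s).
rewrite /= exprMn_comm // (@frobX F p pp pF _ 1 Xt m (commr_sym (commr1 _))).
rewrite (@frobX F p pp pF _ 1 Yt m (commr_sym (commr1 _))).
rewrite (@frobX F p pp pF _ 1 Nt m (commr_sym (commr1 _))) !expr1n.
by rewrite Xt_nil // addr0 mul1r => /addrI ->.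
Qed.

Lemma NaqE a : Nt ^+ (a * p ^ m) = Yt ^+ (a * p ^ m).
Proof. by rewrite [(a * _)%N]mulnC !exprM NqE. Qed.

Definition e0 : 'rV[F]_(r * s) := delta_mx 0 (mxtens_index (Ordinal r0, Ordinal s0)).

Lemma e0XY a c (ha : (a < r)%N) (hc : (c < s)%N) :
  e0 *m (Xt ^+ a * Yt ^+ c) = delta_mx 0 (mxtens_index (Ordinal ha, Ordinal hc)).
Proof.
rewrite XYX /e0 -rowE; apply/rowP => j; case: (mxtens_indexP j) => j1 j2.
rewrite mxE tensmxE !shiftmX !mxE (inj_eq (can_inj (@mxtens_indexK _ _))) -natrM mulnb.
by rewrite !add0n xpair_eqE eqxx /=; congr (_%:R); congr (_ && _); rewrite eq_sym.
Qed.

Lemma span_all (W : 'M[F]_(r * s)) :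
  (forall a, (a < r)%N -> (e0 *m Xt ^+ a <= W)%MS) -> (Nt <= W)%MS -> (1%:M <= W)%MS.
Proof.
move=> H hNW.
have hN : forall u : 'rV_(r * s), (u *m Nt <= W)%MS.
  by move=> u; apply: submx_trans (submxMl u Nt) hNW.
have key : forall c a, (e0 *m (Xt ^+ a * Yt ^+ c) <= W)%MS.
  elim => [|c IHc] a.
    rewrite expr0 mulr1; case: (ltnP a r) => h; first exact: H.
    by rewrite Xt_nil // mulmx0 sub0mx.
  suff: forall d a, (r <= a + d)%N -> (e0 *m (Xt ^+ a * Yt ^+ c.+1) <= W)%MS.
    by move=> /(_ r a); apply; lia.
  elim => [|d IHd] {}a ha.
    by rewrite Xt_nil ?mul0r ?mulmx0 ?sub0mx // -(addn0 a).
  have e : Xt ^+ a * Yt ^+ c.+1 = Xt ^+ a * Yt ^+ c * Nt - Xt ^+ a.+1 * Yt ^+ c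
        - Xt ^+ a.+1 * Yt ^+ c.+1.
    have cc : Yt ^+ c * Xt = Xt * Yt ^+ c by have := cYX c 1; rewrite expr1.
    rewrite /Nt !mulrDr -!mulrA cc !mulrA -[Xt ^+ a * Xt]exprSr.
    rewrite -[Xt ^+ a * Yt ^+ c * Yt]mulrA -[Yt ^+ c * Yt]exprSr.
    rewrite -[Xt ^+ a * Yt ^+ c * Xt]mulrA cc mulrA -[Xt ^+ a * Xt]exprSr.
    rewrite -[Xt ^+ a.+1 * Yt ^+ c * Yt]mulrA -[Yt ^+ c * Yt]exprSr.
    set A := Xt ^+ a.+1 * Yt ^+ c; set B := Xt ^+ a * Yt ^+ c.+1; set C := Xt ^+ a.+1 * Yt ^+ c.+1.
    by rewrite (addrAC (A + B)) addrK (addrC A) addrK.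
  rewrite e !mulmxBr; apply: sub_sub; first apply: sub_sub.
  - by rewrite -mulmxE mulmxA; apply: hN.
  - exact: IHc.
  - by apply: IHd; lia.
apply/row_subP => i; rewrite row1; case: (mxtens_indexP i) => a c.
have -> : mxtens_index (a, c) = mxtens_index (Ordinal (ltn_ord a), Ordinal (ltn_ord c)).
  by congr mxtens_index; congr pair; apply: val_inj.
by rewrite -(e0XY (ltn_ord a) (ltn_ord c)).
Qed.
End Spec.


Lemma sorted_nseq_cons x y k : (y <= x)%N -> sorted geq (x :: nseq k y).
Proof.
move=> yx; elim: k x yx => [|k IH] x yx //=.
by rewrite yx /=; have := IH y (leqnn y).
Qed.

Lemma sorted_rcons_nseq x y k : (y <= x)%N -> sorted geq (rcons (nseq k x) y).
Proof.
move=> yx; case: k => [|k] //=.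
elim: k => [|k IH] /=; first by rewrite yx.
by rewrite leqnn IH.
Qed.

Section Case1.
Variables (F : fieldType) (p m r s : nat).
Hypothesis pp : prime p.
Hypothesis pF : p \in [pchar F].
Hypothesis r0 : (0 < r)%N.
Hypothesis s0 : (0 < s)%N.
Hypothesis rs : (r <= s)%N.
Hypothesis rq : (r <= p ^ m)%N.
Local Notation Xt := (@Xt F r s).
Local Notation Yt := (@Yt F r s).
Local Notation Nt := (@Nt F r s).
Local Notation e0 := (@e0 F r s r0 s0).

Lemma cNX a b : GRing.comm (Nt ^+ a) (Xt ^+ b).
Proof.
apply: commrX; apply/commr_sym; apply: commrX.
have c := @cXY F r s.
rewrite /Nt; apply: commrD; first by apply: commrD; [exact: commr_refl | exact: c].
by apply: commrM; [exact: commr_refl | exact: c].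
Qed.

Let NtE : Nt = Xt + Yt + Xt * Yt := erefl.
Let cXk a c : Xt ^+ a * Yt ^+ c = Yt ^+ c * Xt ^+ a := @cYX F r s c a.

Variable a : nat.
Hypothesis ha : s.-1 = (a * p ^ m)%N.

Lemma N_s1 k : Nt ^+ (s.-1 + k)%N = Yt ^+ s.-1 * Xt ^+ k.
Proof.
rewrite exprD ha NaqE // -ha.
elim: k => [|k IH]; first by rewrite !expr0.
rewrite exprSr mulrA IH NtE !mulrDr -mulrA -exprSr.
have e : forall k, Yt ^+ s.-1 * Xt ^+ k * Yt = 0.
  move=> {IH} k; have c1 : Xt ^+ k * Yt = Yt * Xt ^+ k by have := cXk k 1; rewrite expr1.
  by rewrite -mulrA c1 mulrA -exprSr prednK // Yt_nil // mul0r.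
rewrite (_ : Yt ^+ s.-1 * Xt ^+ k * Yt = 0) ?e // addr0.
rewrite mulrA (_ : Yt ^+ s.-1 * Xt ^+ k * Xt * Yt = 0) ?addr0 //.
by rewrite -(mulrA _ (Xt ^+ k)) -exprSr e.
Qed.

Definition v1 b := if b == 0%N then e0 else e0 *m Xt ^+ b - e0 *m Nt ^+ b.

Lemma case1 : is_jordan_type (jordan_block F r *t jordan_block F s) ((s.-1 + r)%N :: nseq r.-1 s.-1).
Proof.
have hsum : sumn ((s.-1 + r)%N :: nseq r.-1 s.-1) = (r * s)%N.
  rewrite /= sumn_nseq; case: r r0 => // r' _; case: s s0 => // s' _ /=.
  rewrite mulSn mulnS [(s' * r')%N]mulnC; move: (r' * s')%N => t.
  by rewrite addnS addSn addnA.
have hpos : all (fun x => 0 < x)%N ((s.-1 + r)%N :: nseq r.-1 s.-1).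
  rewrite /= all_nseq; apply/andP; split; first lia.
  apply/orP; case: (ltnP 1 r) => h; [right; lia | left; apply/eqP; lia].
split => //; first exact: sorted_nseq_cons (leq_addr _ _).
rewrite A_eq; apply: (@chain_jordan _ _ _ _ v1) => //.
- move=> [|b] hb /=.
    by rewrite /v1 /= N_s1 Xt_nil // mulr0 mulmx0.
  rewrite nth_nseq; move: hb => /=; rewrite size_nseq ltnS => hb; rewrite hb.
  rewrite /v1 /= mulmxBl -!mulmxA !mulmxE.
  have NsY : Nt ^+ s.-1 = Yt ^+ s.-1 by rewrite -{1}[s.-1]addn0 N_s1 expr0 mulr1.
  by rewrite -exprD [(b.+1 + _)%N]addnC N_s1 NsY (cXk b.+1 s.-1) subrr.
- by exists (s.-1 + r)%N; rewrite N_s1 Xt_nil // mulr0.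
move=> W hv hN; apply: (span_all pp pF rq) => // i hi.
case: i hi => [|i] hi.
  by rewrite expr0 mulmx1; have := hv 0%N; rewrite /= size_nseq; apply; lia.
have := hv i.+1; rewrite /= size_nseq /v1 /= => h; have {}h := h (ltac:(lia)).
rewrite -(subrK (e0 *m Nt ^+ i.+1) (e0 *m Xt ^+ i.+1)); apply: addmx_sub => //.
rewrite exprSr -mulmxE mulmxA; apply: submx_trans hN; exact: submxMl.
Qed.
End Case1.


Lemma sign_aux (F : fieldType) n i (M : 'M[F]_n) : ((-1) ^+ i : F) *: ((-1) ^+ i * M) = M.
Proof.
rewrite -signr_odd -[(-1 : 'M[F]_n) ^+ i]signr_odd; case: (odd i).
  by rewrite !expr1 scaleN1r mulN1r opprK.
by rewrite !expr0 scale1r mul1r.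
Qed.

Lemma sum_recr (V : zmodType) n (G : nat -> V) : (0 < n)%N ->
  \sum_(0 <= j < n) G j = \sum_(0 <= j < n.-1) G j + G n.-1.
Proof. by case: n => // n _; rewrite big_nat_recr. Qed.

Section Case2.
Variables (F : fieldType) (p m r s : nat).
Hypothesis pp : prime p.
Hypothesis pF : p \in [pchar F].
Hypothesis r0 : (0 < r)%N.
Hypothesis s0 : (0 < s)%N.
Hypothesis rs : (r <= s)%N.
Hypothesis rq : (r <= p ^ m)%N.
Local Notation Xt := (@Xt F r s).
Local Notation Yt := (@Yt F r s).
Local Notation Nt := (@Nt F r s).
Local Notation e0 := (@e0 F r s r0 s0).
Let NtE : Nt = Xt + Yt + Xt * Yt := erefl.
Let cXk a c : Xt ^+ a * Yt ^+ c = Yt ^+ c * Xt ^+ a := @cYX F r s c a.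
Let cNk a c : Nt ^+ a * Xt ^+ c = Xt ^+ c * Nt ^+ a := @cNX F r s a c.

Variable a : nat.
Hypothesis ha : s.+1 = (a * p ^ m)%N.

Lemma Ns1 : Nt ^+ s.+1 = 0.
Proof. by rewrite ha NaqE // -ha Yt_nil. Qed.

Lemma NXs : (Nt - Xt) ^+ s = \sum_(0 <= j < r) Xt ^+ j * Nt ^+ (s - j).
Proof.
have cNX1 : GRing.comm Nt Xt by have := cNk 1 1; rewrite !expr1.
rewrite exprBn_comm // -(big_mkord xpredT (fun i => ((-1) ^+ i * Nt ^+ (s - i) * Xt ^+ i) *+ 'C(s, i))).
rewrite (@big_cat_nat _ _ _ r) //=; last by apply: leqW.
rewrite [X in _ + X]big_nat_cond [X in _ + X]big1 ?addr0; last first.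
  by move=> i /andP [/andP [hi _] _]; rewrite Xt_nil // mulr0 mul0rn.
apply: eq_big_nat => i /andP [_ hi].
have a0 : (0 < a)%N by move: ha; case: a => //; rewrite mul0n.
have hs : s = (a * p ^ m).-1 by rewrite -ha.
have hb : ('C(s, i)%:R : F) = (-1) ^+ i.
  by rewrite hs (binm1 pp pF) //; apply: leq_trans rq.
rewrite -scaler_nat hb.
by rewrite -mulrA sign_aux cNk.
Qed.

Definition fv := \sum_(0 <= j < r) e0 *m (Xt ^+ j * Nt ^+ (r.-1 - j)).
Definition v2 b := if (b < r.-1)%N then e0 *m Xt ^+ b else fv.

Lemma fvN : fv *m Nt ^+ (s - r.-1) = 0.
Proof.
rewrite /fv mulmx_suml.
rewrite (eq_big_nat _ _ (F2 := fun j => e0 *m (Xt ^+ j * Nt ^+ (s - j)))); last first.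
  move=> j /andP [_ hj]; rewrite -mulmxA mulmxE -mulrA -exprD; do 3!f_equal; lia.
rewrite -mulmx_sumr -NXs NtE (addrAC (Xt + Yt)) (addrAC Xt) subrr add0r.
have -> : Yt + Xt * Yt = Yt * (1 + Xt).
  by rewrite mulrDr mulr1; have := cXk 1 1; rewrite !expr1 => ->.
rewrite exprMn_comm ?Yt_nil ?mul0r ?mulmx0 //.
apply: commrD; first exact: commr1.
by have := cXk 1 1; rewrite !expr1.
Qed.

Lemma case2 : is_jordan_type (jordan_block F r *t jordan_block F s)
   (rcons (nseq r.-1 s.+1) (s - r.-1)%N).
Proof.
have hsz : size (rcons (nseq r.-1 s.+1) (s - r.-1)%N) = r.
  by rewrite size_rcons size_nseq prednK.
have hsum : sumn (rcons (nseq r.-1 s.+1) (s - r.-1)%N) = (r * s)%N.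
  rewrite sumn_rcons sumn_nseq; case: r r0 rs => // r' _ /= h.
  rewrite mulSn mulSn [(r' * s)%N]mulnC; move: (s * r')%N => t; lia.
have hpos : all (fun x => 0 < x)%N (rcons (nseq r.-1 s.+1) (s - r.-1)%N).
  rewrite all_rcons all_nseq /=; apply/andP; split; [lia | by rewrite orbT].
split => //; first exact: sorted_rcons_nseq (leq_trans (leq_subr _ _) (leqnSn _)).
rewrite A_eq; apply: (@chain_jordan _ _ _ _ v2) => //.
- move=> b; rewrite hsz => hb; rewrite nth_rcons size_nseq /v2.
  case: ifP => h.
    by rewrite nth_nseq h Ns1 mulmx0.
  have -> : b = r.-1 by lia.
  by rewrite eqxx fvN.
- by exists s.+1; rewrite Ns1.
move=> W hv hN; apply: (span_all pp pF rq) => // i hi.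
have hN' : forall (u : 'rV[F]_(r * s)) k, (u *m Nt ^+ k.+1 <= W)%MS.
  by move=> u k; rewrite exprSr -mulmxE mulmxA; apply: submx_trans hN; exact: submxMl.
case: (ltnP i r.-1) => h.
  by have := hv i; rewrite hsz /v2 h; apply.
have ei : i = r.-1 by lia.
have := hv r.-1; rewrite hsz /v2 ltnn /fv sum_recr // subnn expr0 mulr1.
move=> /(_ (ltac:(lia))) H; rewrite ei.
set S := \sum_(0 <= j < r.-1) _ in H.
rewrite -(addKr S (e0 *m Xt ^+ r.-1)); apply: addmx_sub => //.
rewrite eqmx_opp /S big_nat_cond; apply: summx_sub => j /andP [/andP [_ hj] _].
have -> : (r.-1 - j)%N = (r.-1 - j).-1.+1 by rewrite prednK // subn_gt0.
by rewrite (mulmxA e0 (Xt ^+ j)); apply: hN'.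
Qed.
End Case2.


Lemma dev_inj s : injective (deviation s).
Proof.
apply: inj_map => x y e.
by have := congr1 (fun z => z + s%:Z) e; rewrite /= !subrK => [[]].
Qed.

Lemma dev1 r s : (0 < r)%N -> (0 < s)%N ->
  deviation s ((s.-1 + r)%N :: nseq r.-1 s.-1) = (r%:Z - 1) :: nseq r.-1 (-1).
Proof.
move=> r0 s0; rewrite /deviation /= map_nseq; congr (_ :: nseq _ _); lia.
Qed.

Unset Implicit Arguments.
Theorem proposition13 (p m r s : nat) :
  prime p -> (0 < r)%N -> (0 < s)%N -> (r <= minn s (p ^ m))%N ->
  forall (F : fieldType), p \in [pchar F] ->
  let A := (jordan_block F r *t jordan_block F s) in
  ((s = 1 %[mod p ^ m])%N ->
     forall l : seq nat, is_jordan_type A l <->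
       deviation s l = (r%:Z - 1) :: nseq r.-1 (-1)) /\
  ((s.+1 = 0 %[mod p ^ m])%N ->
     forall l : seq nat, is_jordan_type A l <->
       deviation s l = rcons (nseq r.-1 1) (- (r%:Z - 1))).
Proof.
move=> pp r0 s0 hr F pF A.
have rs : (r <= s)%N by move: hr; rewrite leq_min => /andP [].
have rq : (r <= p ^ m)%N by move: hr; rewrite leq_min => /andP [].
split.
- move=> hs l.
  have [a ha] : exists a, s.-1 = (a * p ^ m)%N.
    have : (p ^ m %| s - 1)%N by rewrite -eqn_mod_dvd // hs.
    by case/dvdnP => a e; exists a; rewrite -subn1.
  have J := case1 pp pF r0 s0 rs rq ha.
  split => [hl | hd].
    by rewrite (jt_uniq hl J) dev1.
  have -> : l = (s.-1 + r)%N :: nseq r.-1 s.-1 by apply: (@dev_inj s); rewrite hd dev1.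
  exact: J.
- move=> hs l.
  have [a ha] : exists a, s.+1 = (a * p ^ m)%N.
    have : (p ^ m %| s.+1)%N by rewrite /dvdn hs mod0n.
    by case/dvdnP => a e; exists a.
  have J := case2 pp pF r0 s0 rs rq ha.
  have dev2 : deviation s (rcons (nseq r.-1 s.+1) (s - r.-1)%N) = rcons (nseq r.-1 1) (- (r%:Z - 1)).
    rewrite /deviation map_rcons map_nseq; congr (rcons (nseq _ _) _); lia.
  split => [hl | hd].
    by rewrite (jt_uniq hl J) dev2.
  have -> : l = rcons (nseq r.-1 s.+1) (s - r.-1)%N by apply: (@dev_inj s); rewrite hd dev2.
  exact: J.
Qed.
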